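(* Let $\mathrm{Var}$ be a variety of algebras with one binary multiplication defined by multilinear identities. If a multilinear polynomial $f$ in the operations $\cdot,\prec,\succ$ is an identity of all algebras over the operad $\mathrm{Var}\circ\mathrm{GD}^!$ (under the identification described below), then $f$ is a generalized derived identity of $\mathrm{Var}$.
   Context: For an algebra $A$ with derivation $d$, $A^{(d* )}=(A,\cdot,\prec,\succ)$ with $\cdot$ the original product, $x\prec y=x\,d(y)$, $x\succ y=d(x)\,y$; $f$ is a generalized derived identity of $\mathrm{Var}$ if $f=0$ on $A^{(d* )}$ for all $A\in\mathrm{Var}$ and all derivations $d$. The operad $\mathrm{Var}$ has components $\mathrm{Var}(n)$ = multilinear elements of degree $n$ in the free $\mathrm{Var}$-algebra on $x_1,x_2,\dots$. A $\mathrm{GD}^!$-algebra is a vector space with operations $*$, $\star$ such that $*$ is associative and commutative, $(x\star y)\star z-x\star(y\star z)=(x\star z)\star y-x\star(z\star y)$, $x\star(y\star z)=y\star(x\star z)$, $x\star(y*z)=(x\star y)*z$, $x\star(y*z)+y\star(x*z)=(x*y)\star z$; $\mathrm{GD}^!$ is the corresponding operad. The Hadamard product $\mathcal P\otimes\mathcal Q$ of operads has components $\mathcal P(n)\otimes\mathcal Q(n)$ with componentwise composition and symmetric group action; the Manin white product $\mathcal P\circ\mathcal Q$ is the suboperad of $\mathcal P\otimes\mathcal Q$ generated by $\mathcal P(2)\otimes\mathcal Q(2)$. The operations of $\mathrm{Var}\circ\mathrm{GD}^!$ are identified as $x_1\cdot x_2=x_1x_2\otimes(x_1*x_2)$, $x_1\succ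 x_2=x_1x_2\otimes(x_1\star x_2)$, $x_1\prec x_2=x_1x_2\otimes(x_2\star x_1)$. *)

(* Defs.v *)
From HB Require Import structures.
From mathcomp Require Import all_boot all_order all_algebra.
Set Implicit Arguments. Unset Strict Implicit. Unset Printing Implicit Defensive.
Import GRing.Theory.
Local Open Scope ring_scope.

(* one binary multiplication (language of Var) *)
Inductive term1 : Type := V1 of nat | M1 of term1 & term1.
(* the two operations * (Star) and \star (Bul) of GD^! *)
Inductive term2 : Type := V2 of nat | Star of term2 & term2 | Bul of term2 & term2.
Inductive term3 : Type :=
  V3 of nat | Dot of term3 & term3 | Prec of term3 & term3 | Succ of term3 & term3.

Definition term1_comp : comparable term1. Proof. unfold comparable, decidable; decide equality; exact: (eq_comparable _). Defined.
Definition term2_comp : comparable term2. Proof. unfold comparable, decidable; decide equality; exact: (eq_comparable _). Defined.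
Definition term3_comp : comparable term3. Proof. unfold comparable, decidable; decide equality; exact: (eq_comparable _). Defined.
HB.instance Definition _ := comparableMixin term1_comp.
HB.instance Definition _ := comparableMixin term2_comp.
HB.instance Definition _ := comparableMixin term3_comp.

Fixpoint leaves1 (t : term1) : seq nat :=
  match t with V1 i => [:: i] | M1 a b => leaves1 a ++ leaves1 b end.
Fixpoint leaves2 (t : term2) : seq nat :=
  match t with V2 i => [:: i] | Star a b | Bul a b => leaves2 a ++ leaves2 b end.
Fixpoint leaves3 (t : term3) : seq nat :=
  match t with V3 i => [:: i]
  | Dot a b | Prec a b | Succ a b => leaves3 a ++ leaves3 b end.

Definition mlin1 (n : nat) (t : term1) : bool := perm_eq (leaves1 t) (iota 0 n).
Definition mlin2 (n : nat) (t : term2) : bool := perm_eq (leaves2 t) (iota 0 n).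
Definition mlin3 (n : nat) (t : term3) : bool := perm_eq (leaves3 t) (iota 0 n).

Section Algebra.
Variable K : fieldType.

Definition poly1 := seq (K * term1).
Definition poly2 := seq (K * term2).
Definition poly3 := seq (K * term3).

Definition multilin1 (n : nat) (p : poly1) : bool := all (fun c => mlin1 n c.2) p.
Definition multilin2 (n : nat) (p : poly2) : bool := all (fun c => mlin2 n c.2) p.
Definition multilin3 (n : nat) (p : poly3) : bool := all (fun c => mlin3 n c.2) p.

Definition coef (X : eqType) (s : seq (K * X)) (x : X) : K :=
  \sum_(c <- s) (if c.2 == x then c.1 else 0).

Definition bilinear_op (V : lmodType K) (m : V -> V -> V) : Prop :=
  (forall (k : K) (x y z : V), m (k *: x + y) z = k *: m x z + m y z) /\
  (forall (k : K) (x y z : V), m z (k *: x + y) = k *: m z x + m z y).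

Definition is_derivation (V : lmodType K) (m : V -> V -> V) (d : V -> V) : Prop :=
  (forall (k : K) (x y : V), d (k *: x + y) = k *: d x + d y) /\
  (forall x y : V, d (m x y) = m (d x) y + m x (d y)).

Fixpoint eval1 (V : lmodType K) (m : V -> V -> V) (v : nat -> V) (t : term1) : V :=
  match t with V1 i => v i | M1 a b => m (eval1 m v a) (eval1 m v b) end.
Fixpoint eval2 (V : lmodType K) (st bu : V -> V -> V) (v : nat -> V) (t : term2) : V :=
  match t with V2 i => v i
  | Star a b => st (eval2 st bu v a) (eval2 st bu v b)
  | Bul a b => bu (eval2 st bu v a) (eval2 st bu v b) end.
Fixpoint eval3 (V : lmodType K) (dt pr su : V -> V -> V) (v : nat -> V) (t : term3) : V :=
  match t with V3 i => v i
  | Dot a b => dt (eval3 dt pr su v a) (eval3 dt pr su v b)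
  | Prec a b => pr (eval3 dt pr su v a) (eval3 dt pr su v b)
  | Succ a b => su (eval3 dt pr su v a) (eval3 dt pr su v b) end.

Definition holds1 (V : lmodType K) (m : V -> V -> V) (p : poly1) : Prop :=
  forall v : nat -> V, \sum_(c <- p) c.1 *: eval1 m v c.2 = 0.
Definition holds2 (V : lmodType K) (st bu : V -> V -> V) (p : poly2) : Prop :=
  forall v : nat -> V, \sum_(c <- p) c.1 *: eval2 st bu v c.2 = 0.
Definition holds3 (V : lmodType K) (dt pr su : V -> V -> V) (p : poly3) : Prop :=
  forall v : nat -> V, \sum_(c <- p) c.1 *: eval3 dt pr su v c.2 = 0.

Definition in_Var (S : poly1 -> Prop) (V : lmodType K) (m : V -> V -> V) : Prop :=
  bilinear_op m /\ forall s, S s -> holds1 m s.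

Definition Var_identity (S : poly1 -> Prop) (p : poly1) : Prop :=
  forall (V : lmodType K) (m : V -> V -> V), in_Var S m -> holds1 m p.

Definition is_GDshriek (V : lmodType K) (st bu : V -> V -> V) : Prop :=
  [/\ bilinear_op st, bilinear_op bu,
      (forall x y z, st (st x y) z = st x (st y z)) &
      (forall x y, st x y = st y x)] /\
  [/\ (forall x y z, bu (bu x y) z - bu x (bu y z) = bu (bu x z) y - bu x (bu z y)),
      (forall x y z, bu x (bu y z) = bu y (bu x z)),
      (forall x y z, bu x (st y z) = st (bu x y) z) &
      (forall x y z, bu x (st y z) + bu y (st x z) = bu (st x y) z)].

Definition GDshriek_identity (p : poly2) : Prop :=
  forall (V : lmodType K) (st bu : V -> V -> V), is_GDshriek st bu -> holds2 st bu p.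

End Algebra.

(* the identification: x.y = xy (x) (x*y), x>y = xy (x) (x*y), x<y = xy (x) (y*x) *)
Fixpoint proj1t (t : term3) : term1 :=
  match t with V3 i => V1 i
  | Dot a b | Prec a b | Succ a b => M1 (proj1t a) (proj1t b) end.
Fixpoint proj2t (t : term3) : term2 :=
  match t with V3 i => V2 i
  | Dot a b => Star (proj2t a) (proj2t b)
  | Succ a b => Bul (proj2t a) (proj2t b)
  | Prec a b => Bul (proj2t b) (proj2t a) end.

Section WhiteProduct.
Variable K : fieldType.

(* image of a multilinear polynomial g (degree n) of the free operad on
   . , <, > in Var(n) (x) GD^!(n) = (M1(n)/I(n)) (x) (M2(n)/J(n)), written as a
   formal combination of pairs of multilinear monomials in M1(n) (x) M2(n) *)
Definition tensor_image (g : poly3 K) : seq (K * (term1 * term2)) :=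
  map (fun c => (c.1, (proj1t c.2, proj2t c.2))) g.

(* u is zero in (M1(n)/I(n)) (x) (M2(n)/J(n)), i.e. u lies in
   I(n) (x) M2(n) + M1(n) (x) J(n), where I(n) (resp. J(n)) is the space of
   multilinear degree-n identities of Var (resp. of GD^!). *)
Definition zero_in_tensor (S : poly1 K -> Prop) (n : nat)
    (u : seq (K * (term1 * term2))) : Prop :=
  exists (L : seq (poly1 K * term2)) (R : seq (term1 * poly2 K)),
    [/\ forall x, x \in L -> [/\ multilin1 n x.1, Var_identity S x.1 & mlin2 n x.2],
        forall y, y \in R -> [/\ mlin1 n y.1, multilin2 n y.2 & GDshriek_identity y.2] &
        forall (a : term1) (b : term2),
          coef u (a, b) =
            \sum_(x <- L) coef x.1 a * (x.2 == b)%:R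
          + \sum_(y <- R) (y.1 == a)%:R * coef y.2 b].

(* algebras over the operad Var o GD^! (Manin white product): three bilinear
   operations satisfying every multilinear relation g which is zero in
   (Var o GD^!)(n), a suboperad of Var(n) (x) GD^!(n) *)
Definition is_VarGDshriek_alg (S : poly1 K -> Prop) (V : lmodType K)
    (dt pr su : V -> V -> V) : Prop :=
  [/\ bilinear_op dt, bilinear_op pr, bilinear_op su &
      forall (n : nat) (g : poly3 K), multilin3 n g ->
        zero_in_tensor S n (tensor_image g) -> holds3 dt pr su g].

Definition gen_derived_identity (S : poly1 K -> Prop) (f : poly3 K) : Prop :=
  forall (A : lmodType K) (m : A -> A -> A) (d : A -> A),
    in_Var S m -> is_derivation m d ->
    holds3 m (fun x y => m x (d y)) (fun x y => m (d x) y) f.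

End WhiteProduct.

(* Main.v *)
Require Import Defs.
From HB Require Import structures.
From mathcomp Require Import all_boot all_order all_algebra.
From mathcomp Require Import mpoly.
From mathcomp Require Import ring.
Set Implicit Arguments. Unset Strict Implicit. Unset Printing Implicit Defensive.
Import GRing.Theory.
Local Open Scope ring_scope.
Section SumLemmas.
Variable K : fieldType.

Lemma morph_sum (V W : lmodType K) (f : V -> W) (I : Type) (r : seq I) (F : I -> V) :
  f 0 = 0 -> (forall x y, f (x + y) = f x + f y) ->
  f (\sum_(i <- r) F i) = \sum_(i <- r) f (F i).
Proof. move=> f0 fD; elim: r => [|a r IH]; by rewrite ?big_nil ?big_cons ?f0 ?fD ?IH. Qed.

Lemma bil_facts (V : lmodType K) (m : V -> V -> V) : bilinear_op m ->
  [/\ (forall z, m 0 z = 0), (forall z, m z 0 = 0),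
      (forall x y z, m (x + y) z = m x z + m y z) &
      (forall x y z, m z (x + y) = m z x + m z y)] /\
  ((forall k x z, m (k *: x) z = k *: m x z) /\
      (forall k x z, m z (k *: x) = k *: m z x)).
Proof.
move=> [H1 H2].
have m0l : forall z, m 0 z = 0.
  move=> z; have := H1 1 0 0 z; rewrite !scale1r !addr0 => h.
  exact: (addrI _ (esym (etrans (addr0 _) h))).
have m0r : forall z, m z 0 = 0.
  move=> z; have := H2 1 0 0 z; rewrite !scale1r !addr0 => h.
  exact: (addrI _ (esym (etrans (addr0 _) h))).
split; split=> //.
- by move=> x y z; have := H1 1 x y z; rewrite !scale1r.
- by move=> x y z; have := H2 1 x y z; rewrite !scale1r.
- by move=> k x z; rewrite -[k *: x]addr0 H1 m0l addr0.
- by move=> k x z; rewrite -[k *: x]addr0 H2 m0r addr0.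
Qed.

Lemma lin_facts (V : lmodType K) (d : V -> V) :
  (forall (k : K) (x y : V), d (k *: x + y) = k *: d x + d y) ->
  [/\ d 0 = 0, (forall x y, d (x + y) = d x + d y) & (forall k x, d (k *: x) = k *: d x)].
Proof.
move=> H.
have d0 : d 0 = 0.
  have := H 1 0 0; rewrite !scale1r !addr0 => h.
  exact: (addrI _ (esym (etrans (addr0 _) h))).
split=> //.
- by move=> x y; have := H 1 x y; rewrite !scale1r.
- by move=> k x; rewrite -[k *: x]addr0 H d0 addr0.
Qed.

Lemma sum_coefE (X : eqType) (V : lmodType K) (F : X -> V) (s : seq (K * X)) (T : seq X) :
  uniq T -> {subset map snd s <= T} ->
  \sum_(c <- s) c.1 *: F c.2 = \sum_(x <- T) coef s x *: F x.
Proof.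
move=> uT; elim: s => [|c s IH] sub.
  by rewrite big_nil; apply/esym/big1 => x _; rewrite /coef big_nil scale0r.
rewrite big_cons IH; last by move=> x hx; apply: sub; rewrite /= in_cons hx orbT.
have cT : c.2 \in T by apply: sub; rewrite /= in_cons eqxx.
rewrite /coef.
under [X in _ = X]eq_bigr => x _ do rewrite big_cons scalerDl.
rewrite big_split /=; congr (_ + _).
rewrite (bigD1_seq c.2) //= eqxx big1 ?addr0 // => x /negbTE.
by rewrite eq_sym => ->; rewrite scale0r.
Qed.

Lemma sum_coef_eq (X : eqType) (V : lmodType K) (F : X -> V) (s s' : seq (K * X)) :
  (forall x, coef s x = coef s' x) ->
  \sum_(c <- s) c.1 *: F c.2 = \sum_(c <- s') c.1 *: F c.2.
Proof.
move=> H.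
set T := undup (map snd s ++ map snd s').
rewrite (@sum_coefE _ _ _ _ T) ?undup_uniq //; last by move=> x hx; rewrite mem_undup mem_cat hx.
rewrite (@sum_coefE _ _ _ s' T) ?undup_uniq //; last by move=> x hx; rewrite mem_undup mem_cat hx orbT.
by apply: eq_bigr => x _; rewrite H.
Qed.

End SumLemmas.
Section DerivA.
Variable K : fieldType.
Variable A : lmodType K.
Variable m : A -> A -> A.
Variable d : A -> A.
Variable v : nat -> A.
Hypothesis Hm : bilinear_op m.
Hypothesis Hd : is_derivation m d.

Lemma eval1_ext (v1 v2 : nat -> A) a :
  {in leaves1 a, v1 =1 v2} -> eval1 m v1 a = eval1 m v2 a.
Proof.
elim: a => [i|a IHa b IHb] /= H; first by apply: H; rewrite in_cons eqxx.
rewrite IHa ?IHb // => x hx; apply: H; by rewrite mem_cat hx ?orbT.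
Qed.

Definition E a (k : nat -> nat) := eval1 m (fun i => iter (k i) d (v i)) a.
Definition bump (k : nat -> nat) (i : nat) := fun j => if j == i then (k j).+1 else k j.

Lemma E_ext a k1 k2 : {in leaves1 a, k1 =1 k2} -> E a k1 = E a k2.
Proof. by move=> H; apply: eval1_ext => i hi; rewrite /= H. Qed.

Lemma dE a k : uniq (leaves1 a) -> d (E a k) = \sum_(i <- leaves1 a) E a (bump k i).
Proof.
have [[m0l m0r mDl mDr] _] := bil_facts Hm.
have [d0 dD dZ] := lin_facts Hd.1.
elim: a k => [i|a IHa b IHb] k /=.
  by rewrite big_seq1 /E /= /bump eqxx.
rewrite cat_uniq => /and3P [ua nab ub].
rewrite /E /= Hd.2 -/(E a k) -/(E b k) IHa // IHb //.
rewrite (@morph_sum _ _ _ (fun x => m x (E b k)) _ _ _ (m0l _) (fun x y => mDl x y _)).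
rewrite (@morph_sum _ _ _ (fun x => m (E a k) x) _ _ _ (m0r _) (fun x y => mDr x y _)).
rewrite big_cat /=; congr (_ + _); apply: eq_big_seq => i hi.
- rewrite -/(E a (bump k i)) -/(E b (bump k i)); congr (m _ _).
  apply: E_ext => j hj; rewrite /bump; case: eqP => // eji.
  by move: nab => /hasPn /(_ j hj); rewrite eji hi.
- rewrite -/(E a (bump k i)) -/(E b (bump k i)); congr (m _ _).
  apply: E_ext => j hj; rewrite /bump; case: eqP => // eji.
  by move: nab => /hasPn /(_ i hi); rewrite -eji hj.
Qed.

End DerivA.
Section Poly.
Variable K : fieldType.
Variable n : nat.
Local Notation N := (n + n).+1.
Local Notation B := {mpoly K[N]}.

Definition zI (i : nat) : 'I_N := inord (i.*2).
Definition lI (i : nat) : 'I_N := inord (i.*2).+1.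

Lemma zI_val i : (i < n)%N -> val (zI i) = i.*2.
Proof. move=> h; apply: inordK; by rewrite ltnS -addnn leq_add // ltnW. Qed.
Lemma lI_val i : (i < n)%N -> val (lI i) = (i.*2).+1.
Proof. move=> h; apply: inordK; by rewrite ltnS -addnn -addSn leq_add // ltnW. Qed.

Lemma zI_inj i j : (i < n)%N -> (j < n)%N -> (zI i == zI j) = (i == j).
Proof.
move=> hi hj; rewrite -val_eqE /= zI_val // zI_val //.
by apply/eqP/eqP => [/double_inj|->].
Qed.
Lemma lI_inj i j : (i < n)%N -> (j < n)%N -> (lI i == lI j) = (i == j).
Proof.
move=> hi hj; rewrite -val_eqE /= lI_val // lI_val //.
by apply/eqP/eqP => [[/double_inj]|->].
Qed.
Lemma zI_lI i j : (i < n)%N -> (j < n)%N -> (zI i == lI j) = false.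
Proof.
move=> hi hj; rewrite -val_eqE /= zI_val // lI_val //.
apply/negbTE/eqP => h; have := congr1 odd h; by rewrite /= !odd_double.
Qed.

Lemma mderivXv (k j : 'I_N) : ('X_k : B)^`M(j) = (k == j)%:R.
Proof.
rewrite mderivX mnm1E; case: eqP => [->|_]; last by rewrite scale0r.
have -> : (U_(j) - U_(j))%MM = 0%MM by apply/mnmP => i; rewrite mnmBE subnn mnm0E.
by rewrite mpolyX0 scale1r.
Qed.

Definition D (p : B) : B := \sum_(j < n) 'X_(lI j) * 'X_(zI j) * p^`M(zI j).

Lemma D_lin (k : K) (x y : B) : D (k *: x + y) = k *: D x + D y.
Proof.
rewrite /D scaler_sumr -big_split /=; apply: eq_bigr => j _.
by rewrite mderivD mderivZ mulrDr scalerAr.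
Qed.

Lemma D_mul (p q : B) : D (p * q) = D p * q + p * D q.
Proof.
rewrite /D mulr_suml mulr_sumr -big_split /=; apply: eq_bigr => j _.
rewrite mderivM; ring.
Qed.

Lemma D_z i : (i < n)%N -> D 'X_(zI i) = 'X_(lI i) * 'X_(zI i).
Proof.
move=> hi; rewrite /D (bigD1 (Ordinal hi)) //= mderivXv eqxx mulr1 big1 ?addr0 //.
move=> j hj; rewrite mderivXv zI_inj //.
suff -> : (i == j) = false by rewrite mulr0.
apply/negbTE; apply: contra hj => /eqP e; apply/eqP/val_inj; by rewrite /= e.
Qed.

Lemma D_l i : (i < n)%N -> D 'X_(lI i) = 0.
Proof.
move=> hi; rewrite /D big1 // => j _.
by rewrite mderivXv eq_sym zI_lI ?mulr0 //; exact: ltn_ord.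
Qed.

Lemma D1 : D 1 = 0.
Proof. rewrite /D big1 // => j _; by rewrite -mpolyX0 mderivX mnm0E scale0r mulr0. Qed.

Lemma D_lexp i k : (i < n)%N -> D ('X_(lI i) ^+ k) = 0.
Proof.
move=> hi; elim: k => [|k IH]; first by rewrite expr0 D1.
by rewrite exprS D_mul IH D_l // mul0r mulr0 addr0.
Qed.

Definition mono (S : seq nat) (k : nat -> nat) : B :=
  \prod_(i <- S) ('X_(zI i) * 'X_(lI i) ^+ k i).

Lemma D_mono S k : uniq S -> all (fun i => i < n)%N S ->
  D (mono S k) = \sum_(i <- S) mono S (bump k i).
Proof.
elim: S => [|s S IH] /=; first by rewrite /mono big_nil big_nil D1.
move=> /andP [sS uS] /andP [sn aS].
rewrite /mono big_cons -/(mono S k) D_mul IH // big_cons.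
rewrite D_mul D_z // D_lexp // mulr0 addr0.
rewrite big_cons /bump eqxx.
have -> : \prod_(j <- S) ('X_(zI j) * 'X_(lI j) ^+ (if j == s then (k j).+1 else k j)) = mono S k.
  apply: eq_big_seq => j hj; case: eqP => // ejs; by move: sS; rewrite -ejs hj.
congr (_ + _); first by rewrite exprS; ring.
rewrite mulr_sumr; apply: eq_big_seq => i hi /=.
rewrite big_cons; case: eqP => [esi|_]; first by move: sS; rewrite esi hi.
by rewrite /mono.
Qed.

Definition join (S : seq nat) (k1 k2 : nat -> nat) := fun i => if i \in S then k1 i else k2 i.

Lemma mono_cat S1 S2 k1 k2 : (forall j, j \in S2 -> j \notin S1) ->
  mono (S1 ++ S2) (join S1 k1 k2) = mono S1 k1 * mono S2 k2.
Proof.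
move=> H; rewrite /mono big_cat /=; congr (_ * _); apply: eq_big_seq => j hj; rewrite /join.
  by rewrite hj.
by rewrite (negbTE (H j hj)).
Qed.

Lemma D_GD : is_GDshriek (fun x y : B => x * y) (fun x y => D x * y).
Proof.
split; split.
- split=> k x y z; [by rewrite mulrDl scalerAl | by rewrite mulrDr scalerAr].
- split=> k x y z /=; first by rewrite D_lin mulrDl scalerAl.
  by rewrite mulrDr scalerAr.
- by move=> x y z; rewrite mulrA.
- by move=> x y; rewrite mulrC.
- by move=> x y z; rewrite !D_mul; ring.
- by move=> x y z; ring.
- by move=> x y z; ring.
- by move=> x y z; rewrite D_mul; ring.
Qed.

End Poly.
Lemma leaves_proj1 t : leaves1 (proj1t t) = leaves3 t.
Proof. by elim: t => [i|a IHa b IHb|a IHa b IHb|a IHa b IHb] //=; rewrite IHa IHb. Qed.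

Section Main.
Variable K : fieldType.
Variable A : lmodType K.
Variable m : A -> A -> A.
Variable d : A -> A.
Variable v : nat -> A.
Hypothesis Hm : bilinear_op m.
Hypothesis Hd : is_derivation m d.
Variable n : nat.
Local Notation B := {mpoly K[(n + n).+1]}.

Let st := fun x y : B => x * y.
Let bu := fun x y : B => @D K n x * y.
Let w := fun i => ('X_(zI n i) : B).
Let pr := fun x y => m x (d y).
Let su := fun x y => m (d x) y.
Local Notation EE := (E m d v).

Lemma prodF (a b : term1) (Fa Fb : seq (K * (nat -> nat))) :
  (forall j, j \in leaves1 b -> j \notin leaves1 a) ->
  let F := [seq (x.1 * y.1, join (leaves1 a) x.2 y.2) | x <- Fa, y <- Fb] in
  (\sum_(c <- Fa) c.1 *: @mono K n (leaves1 a) c.2) * (\sum_(c <- Fb) c.1 *: @mono K n (leaves1 b) c.2)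
    = \sum_(c <- F) c.1 *: @mono K n (leaves1 a ++ leaves1 b) c.2 /\
  m (\sum_(c <- Fa) c.1 *: EE a c.2) (\sum_(c <- Fb) c.1 *: EE b c.2)
    = \sum_(c <- F) c.1 *: EE (M1 a b) c.2.
Proof.
have [[m0l m0r mDl mDr] [mZl mZr]] := bil_facts Hm.
move=> disj F; rewrite /F !big_allpairs_dep; split.
  rewrite mulr_suml; apply: eq_bigr => x _; rewrite mulr_sumr; apply: eq_bigr => y _ /=.
  by rewrite mono_cat // -scalerAl -scalerAr scalerA.
rewrite (@morph_sum _ _ _ (fun z => m z _) _ _ _ (m0l _) (fun x y => mDl x y _)).
apply: eq_bigr => x _.
rewrite (@morph_sum _ _ _ (fun z => m _ z) _ _ _ (m0r _) (fun x y => mDr x y _)).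
apply: eq_bigr => y _ /=.
rewrite mZl mZr scalerA mulrC; congr (_ *: _).
rewrite /E /= -/(E m d v a _) -/(E m d v b _); congr (m _ _); apply: E_ext => j hj; rewrite /join.
  by rewrite hj.
by rewrite (negbTE (disj j hj)).
Qed.

Lemma derF (a : term1) (F : seq (K * (nat -> nat))) :
  uniq (leaves1 a) -> all (fun i => i < n)%N (leaves1 a) ->
  let F' := [seq (c.1, bump c.2 i) | c <- F, i <- leaves1 a] in
  D (\sum_(c <- F) c.1 *: @mono K n (leaves1 a) c.2)
    = \sum_(c <- F') c.1 *: @mono K n (leaves1 a) c.2 /\
  d (\sum_(c <- F) c.1 *: EE a c.2) = \sum_(c <- F') c.1 *: EE a c.2.
Proof.
move=> ua an F'; rewrite /F' !big_allpairs_dep.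
have [D0 DD DZ] := lin_facts (@D_lin K n).
have [d0 dD dZ] := lin_facts Hd.1.
split.
  rewrite (@morph_sum _ _ _ (@D K n) _ _ _ D0 DD); apply: eq_bigr => c _.
  by rewrite DZ D_mono // scaler_sumr.
rewrite (@morph_sum _ _ _ d _ _ _ d0 dD); apply: eq_bigr => c _.
by rewrite dZ dE // scaler_sumr.
Qed.

Lemma P1 t : uniq (leaves3 t) -> all (fun i => i < n)%N (leaves3 t) ->
  exists F : seq (K * (nat -> nat)),
    eval2 st bu w (proj2t t) = \sum_(c <- F) c.1 *: @mono K n (leaves3 t) c.2 /\
    eval3 m pr su v t = \sum_(c <- F) c.1 *: EE (proj1t t) c.2.
Proof.
elim: t => [i|a IHa b IHb|a IHa b IHb|a IHa b IHb] /=.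
- move=> _ _; exists [:: (1, fun _ => 0%N)]; rewrite !big_seq1 !scale1r /mono big_seq1 expr0 mulr1.
  by split.
- rewrite cat_uniq all_cat => /and3P [ua nab ub] /andP [an bn].
  have [Fa [Ha1 Ha2]] := IHa ua an; have [Fb [Hb1 Hb2]] := IHb ub bn.
  have disj : forall j, j \in leaves1 (proj1t b) -> j \notin leaves1 (proj1t a).
    by move=> j; rewrite !leaves_proj1 => hj; move: nab => /hasPn /(_ j hj).
  have [P1 P2] := prodF Fa Fb disj.
  eexists; rewrite /st Ha1 Hb1 Ha2 Hb2 -!leaves_proj1; split; [exact: P1 | exact: P2].
- rewrite cat_uniq all_cat => /and3P [ua nab ub] /andP [an bn].
  have [Fa [Ha1 Ha2]] := IHa ua an; have [Fb [Hb1 Hb2]] := IHb ub bn.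
  have disj : forall j, j \in leaves1 (proj1t b) -> j \notin leaves1 (proj1t a).
    by move=> j; rewrite !leaves_proj1 => hj; move: nab => /hasPn /(_ j hj).
  rewrite -leaves_proj1 in ub bn.
  have [D1 D2] := derF Fb ub bn.
  have [P1 P2] := prodF Fa [seq (c.1, bump c.2 i) | c <- Fb, i <- leaves1 (proj1t b)] disj.
  eexists; rewrite /bu /pr Ha1 Hb1 Ha2 Hb2 -!leaves_proj1 D1 D2 mulrC; split; [exact: P1 | exact: P2].
- rewrite cat_uniq all_cat => /and3P [ua nab ub] /andP [an bn].
  have [Fa [Ha1 Ha2]] := IHa ua an; have [Fb [Hb1 Hb2]] := IHb ub bn.
  have disj : forall j, j \in leaves1 (proj1t b) -> j \notin leaves1 (proj1t a).
    by move=> j; rewrite !leaves_proj1 => hj; move: nab => /hasPn /(_ j hj).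
  rewrite -leaves_proj1 in ua an.
  have [D1 D2] := derF Fa ua an.
  have [P1 P2] := prodF [seq (c.1, bump c.2 i) | c <- Fa, i <- leaves1 (proj1t a)] Fb disj.
  eexists; rewrite /bu /su Ha1 Hb1 Ha2 Hb2 -!leaves_proj1 D1 D2; split; [exact: P1 | exact: P2].
Qed.


Definition Lr (a : term1) (b : B) : A :=
  \sum_(mm <- msupp b) b@_mm *: EE a (fun i => mm (lI n i)).

Lemma Lr_sub a b s : uniq s -> {subset msupp b <= s} ->
  Lr a b = \sum_(mm <- s) b@_mm *: EE a (fun i => mm (lI n i)).
Proof.
move=> us sub; rewrite /Lr [RHS](bigID (fun mm => mm \in msupp b)) /=.
rewrite [X in _ = _ + X]big1 ?addr0; last first.
  by move=> mm /memN_msupp_eq0 ->; rewrite scale0r.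
rewrite -[RHS]big_filter; apply: perm_big; apply: uniq_perm; [exact: msupp_uniq | exact: filter_uniq | ].
by move=> mm; rewrite mem_filter; case: (boolP (mm \in msupp b)) => // /sub ->.
Qed.

Lemma Lr_lin a (k : K) (x y : B) : Lr a (k *: x + y) = k *: Lr a x + Lr a y.
Proof.
set s := undup (msupp x ++ msupp y ++ msupp (k *: x + y)).
have us : uniq s by exact: undup_uniq.
rewrite (@Lr_sub a (k *: x + y) s) //; last by move=> mm hm; rewrite mem_undup !mem_cat hm !orbT.
rewrite (@Lr_sub a x s) //; last by move=> mm hm; rewrite mem_undup !mem_cat hm.
rewrite (@Lr_sub a y s) //; last by move=> mm hm; rewrite mem_undup !mem_cat hm !orbT.
rewrite scaler_sumr -big_split /=; apply: eq_bigr => mm _.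
by rewrite mcoeffD mcoeffZ scalerDl scalerA.
Qed.

Lemma Lr0 a : Lr a 0 = 0.
Proof.
rewrite (@Lr_sub a 0 [::]) ?big_nil // => mm; by rewrite -[mm \in msupp 0]negbK -mcoeff_eq0 mcoeff0 eqxx.
Qed.

Lemma Lr_sum a (I : Type) (F : seq (K * I)) (f : I -> B) :
  Lr a (\sum_(c <- F) c.1 *: f c.2) = \sum_(c <- F) c.1 *: Lr a (f c.2).
Proof.
elim: F => [|c F IH]; first by rewrite !big_nil Lr0.
by rewrite !big_cons Lr_lin IH.
Qed.

Lemma mono_X S k : uniq S -> all (fun i => i < n)%N S ->
  exists ms, @mono K n S k = 'X_[ms] /\
    forall i, (i < n)%N -> ms (lI n i) = if i \in S then k i else 0%N.
Proof.
elim: S => [|s S IH] /=.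
  move=> _ _; exists 0%MM; rewrite /mono big_nil mpolyX0; split=> // i _.
  by rewrite mnm0E.
move=> /andP [sS uS] /andP [sn aS].
have [ms [Hms Hv]] := IH uS aS.
exists (U_(zI n s) + U_(lI n s) *+ k s + ms)%MM; split.
  by rewrite /mono big_cons -/(@mono K n S k) Hms mpolyXn -!mpolyXD.
move=> i hi; rewrite !mnmDE mulmnE !mnm1E zI_lI // lI_inj // Hv // in_cons.
case: (eqVneq s i) => [<-|nsi] /=.
  by rewrite (negbTE sS) mul1n addn0.
by rewrite mul0n.
Qed.

Lemma Lr_mono a S k : uniq S -> all (fun i => i < n)%N S -> leaves1 a = S ->
  Lr a (@mono K n S k) = EE a k.
Proof.
move=> uS aS la; have [ms [-> Hv]] := mono_X k uS aS.
rewrite /Lr msuppX big_seq1 mcoeffX eqxx scale1r; apply: E_ext => i hi.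
have hin : (i < n)%N by move/allP: aS; apply; rewrite -la.
by rewrite Hv // -la hi.
Qed.

Lemma P1' t : perm_eq (leaves3 t) (iota 0 n) ->
  eval3 m pr su v t = Lr (proj1t t) (eval2 st bu w (proj2t t)).
Proof.
move=> hp.
have ut : uniq (leaves3 t) by rewrite (perm_uniq hp) iota_uniq.
have at' : all (fun i => i < n)%N (leaves3 t).
  by apply/allP => i; rewrite (perm_mem hp) mem_iota.
have [F [H1 H2]] := P1 ut at'.
rewrite H1 H2 Lr_sum; apply: eq_bigr => c _; rewrite Lr_mono //.
exact: leaves_proj1.
Qed.

Lemma main_sum (S : poly1 K -> Prop) (g : poly3 K) : in_Var S m -> multilin3 n g ->
  zero_in_tensor S n (tensor_image g) ->
  \sum_(c <- g) c.1 *: eval3 m pr su v c.2 = 0.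
Proof.
move=> HV Hg [L [R [HL HR Hc]]].
pose Psi := fun p : term1 * term2 => Lr p.1 (eval2 st bu w p.2).
have E1 : \sum_(c <- g) c.1 *: eval3 m pr su v c.2 = \sum_(u <- tensor_image g) u.1 *: Psi u.2.
  rewrite /tensor_image big_map; apply: eq_big_seq => c hc; rewrite /Psi /= P1' //.
  by move/allP: Hg => /(_ c hc).
pose s' := flatten [seq [seq (c.1, (c.2, x.2)) | c <- x.1] | x <- L] ++
           flatten [seq [seq (c.1, (y.1, c.2)) | c <- y.2] | y <- R].
rewrite E1 (@sum_coef_eq _ _ _ Psi _ s'); last first.
  case=> a b; rewrite Hc /coef big_cat !big_flatten /= !big_map; congr (_ + _).
    apply: eq_bigr => x _; rewrite big_map mulr_suml; apply: eq_bigr => c _ /=.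
    by rewrite xpair_eqE; case: (c.2 == a); case: (x.2 == b); rewrite /= ?mulr1 ?mulr0.
  apply: eq_bigr => y _; rewrite big_map mulr_sumr; apply: eq_bigr => c _ /=.
  by rewrite xpair_eqE; case: (c.2 == b); case: (y.1 == a); rewrite /= ?mul1r ?mul0r.
rewrite big_cat !big_flatten /= !big_map.
rewrite big1_seq ?add0r; last first.
  move=> x /andP [_ hx]; have [_ VI _] := HL x hx.
  rewrite big_map /Psi /Lr /=.
  under eq_bigr do rewrite scaler_sumr.
  rewrite exchange_big /=; apply: big1 => mm _.
  have := VI A m HV (fun i => iter (mm (lI n i)) d (v i)).
  rewrite /holds1 => h.
  under eq_bigr do rewrite scalerA mulrC -scalerA.
  by rewrite -scaler_sumr h scaler0.
apply: big1_seq => y /andP [_ hy]; have [_ _ GI] := HR y hy.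
rewrite big_map /Psi /=.
have := GI B st bu (@D_GD K n) w; rewrite /holds2 => h.
by rewrite -Lr_sum h Lr0.
Qed.

End Main.
Unset Implicit Arguments.
Theorem mainTheorem11 (K : fieldType) (S : poly1 K -> Prop)
  (HS : forall s, S s -> exists k : nat, multilin1 k s)
  (n : nat) (f : poly3 K) (Hf : multilin3 n f)
  (Hid : forall (V : lmodType K) (dt pr su : V -> V -> V),
           is_VarGDshriek_alg S dt pr su -> holds3 dt pr su f) :
  gen_derived_identity S f.
Proof.
move=> A m d HV HD; apply: Hid.
have Hm := HV.1.
split.
- exact: Hm.
- split=> k x y z /=; first by rewrite Hm.1.
  by rewrite HD.1 Hm.2.
- split=> k x y z /=; first by rewrite HD.1 Hm.1.
  by rewrite Hm.2.
- move=> n' g Hg Hz v; exact: (@main_sum K A m d v Hm HD n' S g HV Hg Hz).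
Qed.
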